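(* Let $P\subseteq\mathbb{R}^7$ be an associative $3$-plane. Then $\Theta(P) = \Lambda^2(P)\oplus(P\lrcorner\varphi)$, i.e. $\Theta(P) = \Lambda^2(P) + (P\lrcorner\varphi)$ and $\Lambda^2(P)\cap(P\lrcorner\varphi) = \{0\}$; this direct sum is not orthogonal.
   Context: Equip $\mathbb{R}^7$ with its standard inner product, orientation and basis $e_1,\dots,e_7$. Let $\varphi = e_{123} - e_{167} - e_{527} - e_{563} - e_{415} - e_{426} - e_{437}$ ($e_{ijk} = e_i\wedge e_j\wedge e_k$), $\psi = \star\varphi = e_{4567} - e_{4523} - e_{4163} - e_{4127} - e_{2637} - e_{1537} - e_{1526}$, and define $\times$ by $\langle u \times v, w \rangle = \varphi(u,v,w)$. A $3$-dimensional subspace is associative if closed under $\times$. For $u,v$: $u\wedge v$ is the 2-form $(a,b)\mapsto \langle u,a\rangle\langle v,b\rangle - \langle u,b\rangle\langle v,a\rangle$; $u\lrcorner\varphi$ is the 2-form $(a,b)\mapsto \varphi(u,a,b)$; $\Psi_{uv}$ is the 2-form $(a,b)\mapsto\psi(u,v,a,b)$. $P\lrcorner\varphi = \{u\lrcorner\varphi : u\in P\}$, $\Lambda^2(P) = \mathrm{Span}\{u\wedge v: u,v\in P\}$, $\Psi(P) = \mathrm{Span}\{\Psi_{uv} : u,v\in P\}$, and $\Theta(P) = \Lambda^2(P)\oplus\Psi(P)$. The inner product on $\Lambda^2$ is $\langle X,Y\rangle = \sum_{i,j}X(e_i,e_j)Y(e_i,e_j)$. *)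

(* Defs.v *)
From HB Require Import structures.
From mathcomp Require Import all_boot all_order all_algebra.
From mathcomp Require Import reals.
Set Implicit Arguments. Unset Strict Implicit. Unset Printing Implicit Defensive.
Import Order.TTheory GRing.Theory Num.Theory.
Local Open Scope ring_scope.

Section G2.
Variable R : realType.

Definition vec7 := 'rV[R]_7.

(* 1-based index e_n  ~  ordinal n-1 *)
Definition ix (n : nat) : 'I_7 := inord n.-1.

Definition evec (n : nat) : vec7 := delta_mx 0 (ix n).

Definition eb (k : 'I_7) : vec7 := delta_mx 0 k.

Definition e3 (i j k : nat) (u v w : vec7) : R :=
  \det (\matrix_(r < 3, c < 3) (nth 0 [:: u; v; w] r) 0 (ix (nth 0%N [:: i; j; k] c))).

Definition e4 (i j k l : nat) (u v w x : vec7) : R :=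
  \det (\matrix_(r < 4, c < 4)
          (nth 0 [:: u; v; w; x] r) 0 (ix (nth 0%N [:: i; j; k; l] c))).

Definition phi (u v w : vec7) : R :=
  e3 1 2 3 u v w - e3 1 6 7 u v w - e3 5 2 7 u v w - e3 5 6 3 u v w
  - e3 4 1 5 u v w - e3 4 2 6 u v w - e3 4 3 7 u v w.

Definition psi (u v w x : vec7) : R :=
  e4 4 5 6 7 u v w x - e4 4 5 2 3 u v w x - e4 4 1 6 3 u v w x
  - e4 4 1 2 7 u v w x - e4 2 6 3 7 u v w x - e4 1 5 3 7 u v w x
  - e4 1 5 2 6 u v w x.

Definition dot (u v : vec7) : R := \sum_(i < 7) u 0 i * v 0 i.

(* cross product: <u x v, w> = phi(u,v,w); its k-th coordinate is
   <u x v, e_k> = phi(u, v, e_k) *)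
Definition cross (u v : vec7) : vec7 := \row_(k < 7) phi u v (eb k).

Definition is_associative (P : {vspace vec7}) : Prop :=
  \dim P = 3%N /\ (forall u v, u \in P -> v \in P -> cross u v \in P).

(* 2-forms on R^7 are represented by their matrix of values X(e_i, e_j)
   (a bilinear form is determined by these values). *)
Definition form2 := 'M[R]_7.

Definition wedge (u v : vec7) : form2 :=
  \matrix_(i < 7, j < 7) (dot u (eb i) * dot v (eb j) - dot u (eb j) * dot v (eb i)).

Definition contr (u : vec7) : form2 :=
  \matrix_(i < 7, j < 7) phi u (eb i) (eb j).

Definition Psi (u v : vec7) : form2 :=
  \matrix_(i < 7, j < 7) psi u v (eb i) (eb j).

Definition ip2 (X Y : form2) : R := \sum_(i < 7) \sum_(j < 7) X i j * Y i j.

Definition in_span (G : form2 -> Prop) (X : form2) : Prop :=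
  exists (n : nat) (c : 'I_n -> R) (g : 'I_n -> form2),
    (forall i, G (g i)) /\ X = \sum_(i < n) c i *: g i.

Definition Lambda2 (P : {vspace vec7}) (X : form2) : Prop :=
  in_span (fun Y => exists u v, [/\ u \in P, v \in P & Y = wedge u v]) X.

Definition PsiP (P : {vspace vec7}) (X : form2) : Prop :=
  in_span (fun Y => exists u v, [/\ u \in P, v \in P & Y = Psi u v]) X.

Definition Pphi (P : {vspace vec7}) (X : form2) : Prop :=
  exists u, u \in P /\ X = contr u.

Definition Theta (P : {vspace vec7}) (X : form2) : Prop :=
  exists A B, [/\ Lambda2 P A, PsiP P B & X = A + B].

End G2.

(* Main.v *)
Require Import Defs.
From HB Require Import structures.
From mathcomp Require Import all_boot all_order all_algebra.
From mathcomp Require Import reals.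
From mathcomp Require Import ring.
Import Order.TTheory GRing.Theory Num.Theory.
Local Open Scope ring_scope.
Set Implicit Arguments. Unset Strict Implicit.

Section S1.
Variable R : realType.
Lemma detS n (A : 'M[R]_n.+1) : \det A = \sum_(j < n.+1) (-1)^+j * A ord0 j * \det (\matrix_(i<n,k<n) A (lift ord0 i) (lift j k)).
Proof.
rewrite (expand_det_row _ ord0); apply eq_bigr => j _; rewrite /cofactor add0n.
have -> : row' ord0 (col' j A) = \matrix_(i<n,k<n) A (lift ord0 i) (lift j k) by apply/matrixP => a b; rewrite !mxE.
ring. Qed.

Lemma e3E i j k (u v w : vec7 R) : e3 i j k u v w =
  u 0 (ix i) * (v 0 (ix j) * w 0 (ix k) - v 0 (ix k) * w 0 (ix j))
 - u 0 (ix j) * (v 0 (ix i) * w 0 (ix k) - v 0 (ix k) * w 0 (ix i))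
 + u 0 (ix k) * (v 0 (ix i) * w 0 (ix j) - v 0 (ix j) * w 0 (ix i)).
Proof.
rewrite /e3 detS !big_ord_recl big_ord0.
rewrite !detS !big_ord_recl !big_ord0. rewrite !detS !big_ord_recl !big_ord0 !det_mx00 !mxE /=.
ring.
Qed.

Lemma e4E i j k l (u v w x : vec7 R) : e4 i j k l u v w x =
  u 0 (ix i) * e3 j k l v w x - u 0 (ix j) * e3 i k l v w x
 + u 0 (ix k) * e3 i j l v w x - u 0 (ix l) * e3 i j k v w x.
Proof.
rewrite !e3E /e4 detS !big_ord_recl big_ord0.
rewrite !detS !big_ord_recl !big_ord0. rewrite !detS !big_ord_recl !big_ord0. rewrite !detS !big_ord_recl !big_ord0 !det_mx00 !mxE /=.
ring.
Qed.
End S1.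

Section S2.
Variable R : realType.
Lemma ix_eq m n : (m < 7)%N -> (n < 7)%N -> (ix m.+1 == ix n.+1) = (m == n).
Proof. by move=> hm hn; rewrite /ix /= -val_eqE /= !inordK. Qed.

Lemma ixS (i : 'I_7) : ix i.+1 = i.
Proof. by rewrite /ix /= inord_val. Qed.
Lemma sum7 (F : 'I_7 -> R) : \sum_(i<7) F i = F (ix 1) + F (ix 2) + F (ix 3) + F (ix 4) + F (ix 5) + F (ix 6) + F (ix 7).
Proof.
rewrite (eq_bigr (fun i : 'I_7 => F (ix i.+1))) => [|i _]; last by rewrite ixS.
rewrite !big_ord_recl big_ord0 addr0 !addrA. reflexivity.
Qed.
Lemma phiE (u v w : vec7 R) : phi u v w =  e3 1 2 3 u v w - e3 1 6 7 u v w - e3 5 2 7 u v w - e3 5 6 3 u v w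
  - e3 4 1 5 u v w - e3 4 2 6 u v w - e3 4 3 7 u v w.
Proof. by []. Qed.
Lemma psiE (u v w x : vec7 R) : psi u v w x =
  e4 4 5 6 7 u v w x - e4 4 5 2 3 u v w x - e4 4 1 6 3 u v w x
  - e4 4 1 2 7 u v w x - e4 2 6 3 7 u v w x - e4 1 5 3 7 u v w x
  - e4 1 5 2 6 u v w x.
Proof. by []. Qed.
Lemma crossE (u v : vec7 R) k : cross u v 0 k = phi u v (eb R k).
Proof. by rewrite mxE. Qed.
Lemma ebE k m : eb R k 0 m = (m == k)%:R :> R.
Proof. by rewrite mxE eqxx. Qed.
Lemma dotE (u v : vec7 R) : dot u v = u 0 (ix 1) * v 0 (ix 1) + u 0 (ix 2) * v 0 (ix 2) + u 0 (ix 3) * v 0 (ix 3)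
 + u 0 (ix 4) * v 0 (ix 4) + u 0 (ix 5) * v 0 (ix 5) + u 0 (ix 6) * v 0 (ix 6) + u 0 (ix 7) * v 0 (ix 7).
Proof. by rewrite /dot sum7. Qed.

Ltac cross_tac := rewrite crossE phiE !e3E !ebE !ix_eq //; rewrite /= ?mulr1n ?mulr0n; ring.
Lemma cross1 (u v : vec7 R) : cross u v 0 (ix 1) = u 0 (ix 2) * v 0 (ix 3) - u 0 (ix 3) * v 0 (ix 2) + u 0 (ix 4) * v 0 (ix 5) - u 0 (ix 5) * v 0 (ix 4) - u 0 (ix 6) * v 0 (ix 7) + u 0 (ix 7) * v 0 (ix 6).
Proof. cross_tac. Qed.
Lemma cross2 (u v : vec7 R) : cross u v 0 (ix 2) = 0 - u 0 (ix 1) * v 0 (ix 3) + u 0 (ix 3) * v 0 (ix 1) + u 0 (ix 4) * v 0 (ix 6) + u 0 (ix 5) * v 0 (ix 7) - u 0 (ix 6) * v 0 (ix 4) - u 0 (ix 7) * v 0 (ix 5).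
Proof. cross_tac. Qed.
Lemma cross3 (u v : vec7 R) : cross u v 0 (ix 3) = u 0 (ix 1) * v 0 (ix 2) - u 0 (ix 2) * v 0 (ix 1) + u 0 (ix 4) * v 0 (ix 7) - u 0 (ix 5) * v 0 (ix 6) + u 0 (ix 6) * v 0 (ix 5) - u 0 (ix 7) * v 0 (ix 4).
Proof. cross_tac. Qed.
Lemma cross4 (u v : vec7 R) : cross u v 0 (ix 4) = 0 - u 0 (ix 1) * v 0 (ix 5) - u 0 (ix 2) * v 0 (ix 6) - u 0 (ix 3) * v 0 (ix 7) + u 0 (ix 5) * v 0 (ix 1) + u 0 (ix 6) * v 0 (ix 2) + u 0 (ix 7) * v 0 (ix 3).
Proof. cross_tac. Qed.
Lemma cross5 (u v : vec7 R) : cross u v 0 (ix 5) = u 0 (ix 1) * v 0 (ix 4) - u 0 (ix 2) * v 0 (ix 7) + u 0 (ix 3) * v 0 (ix 6) - u 0 (ix 4) * v 0 (ix 1) - u 0 (ix 6) * v 0 (ix 3) + u 0 (ix 7) * v 0 (ix 2).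
Proof. cross_tac. Qed.
Lemma cross6 (u v : vec7 R) : cross u v 0 (ix 6) = u 0 (ix 1) * v 0 (ix 7) + u 0 (ix 2) * v 0 (ix 4) - u 0 (ix 3) * v 0 (ix 5) - u 0 (ix 4) * v 0 (ix 2) + u 0 (ix 5) * v 0 (ix 3) - u 0 (ix 7) * v 0 (ix 1).
Proof. cross_tac. Qed.
Lemma cross7 (u v : vec7 R) : cross u v 0 (ix 7) = 0 - u 0 (ix 1) * v 0 (ix 6) + u 0 (ix 2) * v 0 (ix 5) + u 0 (ix 3) * v 0 (ix 4) - u 0 (ix 4) * v 0 (ix 3) - u 0 (ix 5) * v 0 (ix 2) + u 0 (ix 6) * v 0 (ix 1).
Proof. cross_tac. Qed.


Ltac pexp := rewrite ?(dotE, psiE, e4E, phiE, e3E, cross1, cross2, cross3, cross4, cross5, cross6, cross7).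

Lemma phi_dot (x a b : vec7 R) : phi x a b = dot (cross x a) b.
Proof. pexp. ring. Qed.

Lemma idI (u v a b : vec7 R) : phi (cross u v) a b = dot u a * dot v b - dot u b * dot v a - psi u v a b.
Proof. pexp. ring. Qed.

Lemma normI (u v : vec7 R) : dot (cross u v) (cross u v) = dot u u * dot v v - dot u v ^+ 2.
Proof. pexp. ring. Qed.

Lemma psi_alt (u v : vec7 R) : psi u v u v = 0.
Proof. pexp. ring. Qed.
Lemma phi_lin1 (c : R) (x y a b : vec7 R) : phi (c *: x + y) a b = c * phi x a b + phi y a b.
Proof. pexp. rewrite !mxE. ring. Qed.
Lemma phi_lin2 (c : R) (x y a b : vec7 R) : phi a (c *: x + y) b = c * phi a x b + phi a y b.
Proof. pexp. rewrite !mxE. ring. Qed.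
Lemma phi_lin3 (c : R) (x y a b : vec7 R) : phi a b (c *: x + y) = c * phi a b x + phi a b y.
Proof. pexp. rewrite !mxE. ring. Qed.
Lemma phi_anti (x a b : vec7 R) : phi x b a = - phi x a b.
Proof. pexp. ring. Qed.
Lemma phi_cyc (x a b : vec7 R) : phi x a b = phi a b x.
Proof. pexp. ring. Qed.
Lemma dot_lin2 (c : R) (x y a : vec7 R) : dot a (c *: x + y) = c * dot a x + dot a y.
Proof. pexp. rewrite !mxE. ring. Qed.
Lemma dotC (x y : vec7 R) : dot x y = dot y x.
Proof. pexp. ring. Qed.

Lemma ord7P (P : 'I_7 -> Prop) : P (ix 1) -> P (ix 2) -> P (ix 3) -> P (ix 4) -> P (ix 5) -> P (ix 6) -> P (ix 7) -> forall k, P k.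
Proof.
move=> h1 h2 h3 h4 h5 h6 h7 k; rewrite -(ixS k).
by case: k => [[|[|[|[|[|[|[|m]]]]]]] Hm].
Qed.

Lemma cross_cross (u w : vec7 R) : cross u (cross u w) = dot u w *: u - dot u u *: w.
Proof.
apply/rowP; apply: ord7P; pexp; rewrite ?mxE; ring.
Qed.
End S2.

Section S3.
Variable R : realType.
Implicit Types (u v w x y a b : vec7 R).

Definition ev (X : form2 R) a b := \sum_(i < 7) \sum_(j < 7) a 0 i * X i j * b 0 j.

Lemma dot_eb u k : dot u (eb R k) = u 0 k.
Proof.
rewrite /dot (bigD1 k) //= ebE eqxx mulr1 big1 ?addr0 // => i /negbTE hik.
by rewrite ebE hik mulr0.
Qed.

Lemma Psi_eq u v : Psi u v = wedge u v - contr (cross u v).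
Proof. apply/matrixP => i j; rewrite !mxE idI; ring. Qed.

Lemma contrD (c : R) x y : contr (c *: x + y) = c *: contr x + contr y.
Proof. by apply/matrixP => i j; rewrite !mxE phi_lin1. Qed.

Lemma contr0 : contr (0 : vec7 R) = 0.
Proof.
have := contrD 1 0 0; rewrite scaler0 addr0 scale1r => h.
by have := congr1 (fun X => X - contr 0) h; rewrite addrK subrr.
Qed.

Lemma contrZ (c : R) x : contr (c *: x) = c *: contr x.
Proof. by have := contrD c x 0; rewrite addr0 contr0 addr0. Qed.

Lemma crossZ (c : R) x y : cross (c *: x) y = c *: cross x y.
Proof. by apply/rowP => k; rewrite !mxE -[c *: x]addr0 phi_lin1 (_ : phi 0 y (eb R k) = 0) ?addr0 //; 
  have := phi_lin1 1 (0 : vec7 R) 0 y (eb R k); rewrite scaler0 addr0 mul1r => h;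
  have := congr1 (fun t => t - phi 0 y (eb R k)) h; rewrite addrK subrr. Qed.

Lemma lin_sum (f : vec7 R -> R) : (forall c x y, f (c *: x + y) = c * f x + f y) ->
  forall n (c : 'I_n -> R) (g : 'I_n -> vec7 R), f (\sum_(i < n) c i *: g i) = \sum_(i < n) c i * f (g i).
Proof.
move=> hf n c g.
have f0 : f 0 = 0.
  have := hf 1 0 0; rewrite scaler0 addr0 mul1r => h.
  by have := congr1 (fun t => t - f 0) h; rewrite addrK subrr.
elim/big_rec2: _ => [//|i y1 y2 _ <-]; exact: hf.
Qed.

Lemma dot_sum w n (c : 'I_n -> R) (g : 'I_n -> vec7 R) : dot w (\sum_(i < n) c i *: g i) = \sum_(i < n) c i * dot w (g i).
Proof. by apply: lin_sum => c' x y; rewrite dot_lin2. Qed.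

Lemma dot_gt0 a : a != 0 -> 0 < dot a a.
Proof.
move=> ha; rewrite lt_def; apply/andP; split; last first.
  by apply: sumr_ge0 => i _; rewrite -expr2 sqr_ge0.
apply/eqP => h; move/eqP: ha; apply; apply/rowP => k; rewrite mxE.
have hge : forall i : 'I_7, true -> 0 <= a 0 i * a 0 i by move=> i _; rewrite -expr2 sqr_ge0.
have := @psumr_eq0P _ _ xpredT (fun i => a 0 i * a 0 i) hge h k isT.
by move/eqP; rewrite mulf_eq0 orbb => /eqP.
Qed.

Lemma ker_nz m n (M : 'M[R]_(m, n)) : (n < m)%N -> exists c : 'rV[R]_m, c != 0 /\ c *m M = 0.
Proof.
move=> hnm.
have hk : kermx M != 0.
  rewrite -mxrank_eq0 mxrank_ker subn_eq0 -ltnNge.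
  exact: leq_ltn_trans (rank_leq_col M) hnm.
have [r hr] : exists r, row r (kermx M) != 0.
  case: (pickP (fun r => row r (kermx M) != 0)) => [r hr|h]; first by exists r.
  exfalso; move/eqP: hk; apply; apply/row_matrixP => r; rewrite row0; apply/eqP.
  exact: negbFE (h r).
by exists (row r (kermx M)); split => //; apply/sub_kermxP; exact: row_sub.
Qed.

Lemma orth1 (P : {vspace vec7 R}) w : \dim P = 3%N -> exists u, [/\ u \in P, u != 0 & dot w u = 0].
Proof.
move=> hd; set b := vbasis P.
have [c [hc0 hcM]] := @ker_nz (\dim P) 1 (\matrix_(i < \dim P, j < 1) dot w b`_i) (ltac:(by rewrite hd)).
exists (\sum_i c 0 i *: b`_i); split.
- apply: rpred_sum => i _; apply: rpredZ; apply: vbasis_mem; apply: mem_nth; by rewrite size_tuple.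
- apply/eqP => hz; move/eqP: hc0; apply; apply/rowP => i; rewrite mxE.
  by move/freeP: (basis_free (vbasisP P)) => /(_ (fun i => c 0 i) hz i).
- rewrite dot_sum; transitivity ((c *m \matrix_(i < \dim P, j < 1) dot w b`_i) 0 0); last by rewrite hcM mxE.
  rewrite mxE.
  by apply: eq_bigr => j _; rewrite mxE.
Qed.

Lemma orth2 (P : {vspace vec7 R}) : \dim P = 3%N -> exists a, a != 0 /\ forall x, x \in P -> dot a x = 0.
Proof.
move=> hd; set b := vbasis P.
have [c [hc0 hcM]] := @ker_nz 7 (\dim P) (\matrix_(k < 7, i < \dim P) b`_i 0 k) (ltac:(by rewrite hd)).
exists c; split => // x hx.
rewrite (coord_vbasis hx) dot_sum big1 // => i _.
rewrite (_ : dot c _ = 0) ?mulr0 //.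
transitivity ((c *m \matrix_(k < 7, i < \dim P) b`_i 0 k) 0 i); last by rewrite hcM mxE.
rewrite mxE /dot; apply: eq_bigr => k _; by rewrite mxE.
Qed.

End S3.

Section S4.
Variable R : realType.
Implicit Types (u v w x y a b : vec7 R).

Lemma ev_lin (c : R) (X Y : form2 R) a b : ev (c *: X + Y) a b = c * ev X a b + ev Y a b.
Proof. rewrite /ev !sum7 !mxE; ring. Qed.

Lemma ev_wedge u v a b : ev (wedge u v) a b = dot u a * dot v b - dot u b * dot v a.
Proof. rewrite /ev !sum7 !mxE !dot_eb !dotE; ring. Qed.

Lemma ev0 a b : ev 0 a b = 0.
Proof. rewrite /ev !sum7 !mxE; ring. Qed.

Lemma ev_contr w a b : ev (contr w) a b = phi w a b.
Proof.
have E1 := lin_sum (f := fun x => phi w x b) (fun c x y => phi_lin2 c x y w b) (fun j => a 0 j) (fun j => delta_mx 0 j).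
simpl in E1; rewrite -row_sum_delta in E1.
rewrite E1 /ev; apply: eq_bigr => i _.
have E2 := lin_sum (f := fun x => phi w (delta_mx 0 i) x) (fun c x y => phi_lin3 c x y w (delta_mx 0 i)) (fun j => b 0 j) (fun j => delta_mx 0 j).
simpl in E2; rewrite -row_sum_delta in E2.
rewrite E2 mulr_sumr; apply: eq_bigr => j _; rewrite mxE /eb; ring.
Qed.

Lemma ip2_wedge u v (Y : form2 R) : ip2 (wedge u v) Y = ev Y u v - ev Y v u.
Proof. rewrite /ip2 /ev !sum7 !mxE !dot_eb; ring. Qed.

End S4.

Section S5.
Variable R : realType.
Implicit Types (u v w x y a b : vec7 R).

Lemma in_span0 (G : form2 R -> Prop) : in_span G 0.
Proof. by exists 0%N, (fun _ => 0), (fun _ => 0); split; [by case=> m; rewrite ltn0 | by rewrite big_ord0]. Qed.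

Lemma in_span1 (G : form2 R -> Prop) X : G X -> in_span G X.
Proof. by move=> hX; exists 1%N, (fun _ => 1), (fun _ => X); split => //; rewrite big_ord1 scale1r. Qed.

Lemma in_span_lin (G : form2 R -> Prop) (c : R) X Y : in_span G X -> in_span G Y -> in_span G (c *: X + Y).
Proof.
move=> [n1 [c1 [g1 [h1 ->]]]] [n2 [c2 [g2 [h2 ->]]]].
exists (n1 + n2)%N, (fun i => match split i with inl j => c * c1 j | inr j => c2 j end),
  (fun i => match split i with inl j => g1 j | inr j => g2 j end).
split.
- by move=> i; case: (split i).
- rewrite big_split_ord /= scaler_sumr; congr (_ + _); apply: eq_bigr => i _.
  + have -> : split (lshift n2 i) = inl i := unsplitK (inl _ i).
    by rewrite scalerA.
  + by have -> : split (rshift n1 i) = inr i := unsplitK (inr _ i).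
Qed.

Lemma in_span_add (G : form2 R -> Prop) X Y : in_span G X -> in_span G Y -> in_span G (X + Y).
Proof. by move=> hX hY; have := in_span_lin 1 hX hY; rewrite scale1r. Qed.

Lemma span_ind (G S : form2 R -> Prop) : S 0 -> (forall (c : R) X Y, S X -> S Y -> S (c *: X + Y)) ->
  (forall X, G X -> S X) -> forall X, in_span G X -> S X.
Proof.
move=> S0 Slin SG X [n [c [g [hg ->]]]].
elim/big_rec: _ => // i Y _ HY; exact: Slin (SG _ (hg i)) HY.
Qed.

End S5.

Unset Implicit Arguments.


Theorem corollary4p11 (R : realType) (P : {vspace vec7 R}) :
  is_associative P ->
  [/\ (* Theta(P) = Lambda^2(P) + (P _| phi) *)
      (forall X : form2 R,
         Theta P X <-> exists A B, [/\ Lambda2 P A, Pphi P B & X = A + B]),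
      (* Lambda^2(P) /\ (P _| phi) = {0} *)
      (forall X : form2 R, Lambda2 P X -> Pphi P X -> X = 0)
    & (* the direct sum is not orthogonal *)
      (exists A B : form2 R, [/\ Lambda2 P A, Pphi P B & ip2 A B != 0])].
Proof.
move=> [hd hcl]; split.
- move=> X; split.
  + case=> A [B [hA hB ->]].
    have hS : exists A' B', [/\ Lambda2 P A', Pphi P B' & B = A' + B'].
      move: B hB; apply: span_ind.
      * exists 0, 0; split; [exact: in_span0 | exists 0; split; [exact: rpred0 | by rewrite contr0] | by rewrite addr0].
      * move=> c X1 Y1 [A1 [B1 [hA1 [w1 [hw1 ->]] ->]]] [A2 [B2 [hA2 [w2 [hw2 ->]] ->]]].
        exists (c *: A1 + A2), (contr (c *: w1 + w2)); split.
        -- exact: in_span_lin.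
        -- by exists (c *: w1 + w2); split => //; rewrite memvD ?memvZ.
        -- by rewrite contrD scalerDr addrACA.
      * move=> Y [u [v [hu hv ->]]].
        exists (wedge u v), (contr ((-1) *: cross u v)); split.
        -- by apply: in_span1; exists u, v.
        -- by exists ((-1) *: cross u v); split => //; rewrite memvZ // hcl.
        -- by rewrite Psi_eq contrZ scaleN1r.
    case: hS => A' [B' [hA' hB' ->]].
    by exists (A + A'), B'; split => //; [apply: in_span_add | rewrite addrA].
  + case=> A [B [hA [w [hw ->]] ->]].
    have [u [hu hu0 huw]] := orth1 w hd.
    have hk : dot u u != 0 by rewrite gt_eqF // dot_gt0.
    pose u' := (- (dot u u)^-1) *: u; pose v' := cross u w.
    have hu' : u' \in P by rewrite memvZ.
    have hv' : v' \in P by rewrite hcl.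
    have hw' : cross u' v' = w.
      rewrite /u' /v' crossZ cross_cross dotC huw scale0r sub0r scalerN scaleNr opprK scalerA.
      by rewrite mulVf // scale1r.
    have -> : contr w = contr (cross u' v') by rewrite hw'.
    exists (A + wedge u' v'), ((-1) *: Psi u' v'); split.
    * by apply: in_span_add => //; apply: in_span1; exists u', v'.
    * exists 1%N, (fun _ => -1), (fun _ => Psi u' v'); split; last by rewrite big_ord1.
      by move=> _; exists u', v'.
    * by rewrite Psi_eq scaleN1r opprB -addrA (addrC (wedge _ _)) subrK.
- move=> X hX [w [hw hXw]].
  have [a [ha0 ha]] := orth2 hd.
  have [hw0|hw0] := eqVneq w 0; first by rewrite hXw hw0 contr0.
  exfalso.
  have hev : forall b, ev X a b = 0.
    move=> b; move: X hX {hXw}; apply: span_ind.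
    * exact: ev0.
    * by move=> c X Y h1 h2; rewrite ev_lin h1 h2 mulr0 addr0.
    * move=> Y [u [v [hu hv ->]]].
      by rewrite ev_wedge (dotC u a) (dotC v a) !ha // mul0r mulr0 subrr.
  have := hev (cross w a); rewrite hXw ev_contr phi_dot normI (dotC w a) (ha w hw) expr2 mul0r subr0 => h.
  by have := mulr_gt0 (dot_gt0 hw0) (dot_gt0 ha0); rewrite h ltxx.
- have [u [hu hu0 _]] := orth1 0 hd.
  have [v [hv hv0 huv]] := orth1 u hd.
  exists (wedge u v), (contr (cross u v)); split.
  + by apply: in_span1; exists u, v.
  + by exists (cross u v); split => //; rewrite hcl.
  + rewrite ip2_wedge !ev_contr (phi_anti _ u v) opprK.
    rewrite phi_cyc phi_dot normI huv expr2 mul0r subr0.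
    have := mulr_gt0 (dot_gt0 hu0) (dot_gt0 hv0).
    by move=> h; rewrite -mulr2n mulrn_eq0 /= gt_eqF.
Qed.
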